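(* Let $m$ be a point of the locale $\mathrm{Max}(R)$ (a model of the geometric theory presenting it). Then $\sigma_m(a):=(\{r\in\mathbb{Q}: m\models D(a-r)\},\ \{s\in\mathbb{Q}: m\models D(s-a)\})$ is a Dedekind real for every $a\in R$, and $\sigma_m:R\to\mathbb{R}$ is a representation, i.e. a Riesz space morphism (linear and lattice preserving) with $\sigma_m(1)=1$.
   Context: $R$ is a Riesz space over $\mathbb{Q}$ with strong unit $1$; rationals $r$ are identified with $r\cdot1$. $\mathrm{Max}(R)$ is the locale (frame) freely generated by symbols $D(a)$, $a\in R$, subject to: $D(1)=1$; $D(a)\wedge D(-a)=0$; $D(a+b)\le D(a)\vee D(b)$; $D(a)=0$ if $a\le0$; $D(a\vee b)=D(a)\vee D(b)$; $D(a)=\bigvee_{s>0,\ s\in\mathbb{Q}}D(a-s)$. A point/model $m$ is a completely prime filter of this frame; $m\models D(a)$ means $D(a)\in m$. A Dedekind real is a pair (lower real $L$, upper real $U$) of rounded inhabited down-/up-closed sets of rationals with every element of $L$ below every element of $U$ and, for rationals $p<q$, $p\in L$ or $q\in U$. *)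

(* Defs.v *)
From HB Require Import structures.
From mathcomp Require Import all_boot all_order all_algebra.
Set Implicit Arguments. Unset Strict Implicit. Unset Printing Implicit Defensive.
Import Order.TTheory GRing.Theory Num.Theory.
Local Open Scope ring_scope.

Record is_riesz (V : lmodType rat) (le : rel V) (join : V -> V -> V) : Prop := {
  riesz_refl : forall a, le a a;
  riesz_trans : forall a b c, le a b -> le b c -> le a c;
  riesz_antisym : forall a b, le a b -> le b a -> a = b;
  riesz_add : forall a b c, le a b -> le (a + c) (b + c);
  riesz_scale : forall (l : rat) a b, 0 <= l -> le a b -> le (l *: a) (l *: b);
  riesz_join_l : forall a b, le a (join a b);
  riesz_join_r : forall a b, le b (join a b);
  riesz_join_lub : forall a b c, le a c -> le b c -> le (join a b) c
}.

Definition rmeet (V : lmodType rat) (join : V -> V -> V) (a b : V) : V :=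
  - join (- a) (- b).

Definition strong_unit (V : lmodType rat) (le : rel V) (u : V) : Prop :=
  le 0 u /\ forall a : V, exists n : nat, le a (n%:R *: u).

(* A point of the locale Max(R) = a model of the geometric theory presenting it:
   a subset [m] of R (m a  <->  m |= D(a)) satisfying the relations, where the
   rational s is identified with s *: u. *)
Definition is_point (V : lmodType rat) (le : rel V) (join : V -> V -> V) (u : V)
    (m : V -> Prop) : Prop :=
  m u /\
  (forall a, ~ (m a /\ m (- a))) /\
  (forall a b, m (a + b) -> m a \/ m b) /\
  (forall a, le a 0 -> ~ m a) /\
  (forall a b, m (join a b) <-> (m a \/ m b)) /\
  (forall a, m a <-> exists s : rat, 0 < s /\ m (a - s *: u)).

Definition cut := ((rat -> Prop) * (rat -> Prop))%type.

Definition is_dedekind (x : cut) : Prop :=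
  let L := x.1 in let U := x.2 in
  (exists p, L p) /\ (exists q, U q) /\
  (forall p, L p <-> exists p', p < p' /\ L p') /\
  (forall q, U q <-> exists q', q' < q /\ U q') /\
  (forall p q, L p -> U q -> p < q) /\
  (forall p q, p < q -> L p \/ U q).

Definition cut_eq (x y : cut) : Prop :=
  forall r, (x.1 r <-> y.1 r) /\ (x.2 r <-> y.2 r).

Definition cut_of_rat (c : rat) : cut := (fun r : rat => is_true (r < c), fun s : rat => is_true (c < s)).

Definition cut_add (x y : cut) : cut :=
  (fun r => exists p q, x.1 p /\ y.1 q /\ r = p + q,
   fun s => exists p q, x.2 p /\ y.2 q /\ s = p + q).

Definition cut_scale (l : rat) (x : cut) : cut :=
  if 0 < l then (fun r => x.1 (r / l), fun s => x.2 (s / l))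
  else if l < 0 then (fun r => x.2 (r / l), fun s => x.1 (s / l))
  else cut_of_rat 0.

Definition cut_max (x y : cut) : cut :=
  (fun r => x.1 r \/ y.1 r, fun s => x.2 s /\ y.2 s).

Definition cut_min (x y : cut) : cut :=
  (fun r => x.1 r /\ y.1 r, fun s => x.2 s \/ y.2 s).

Definition sigma (V : lmodType rat) (u : V) (m : V -> Prop) (a : V) : cut :=
  (fun r => m (a - r *: u), fun s => m (s *: u - a)).

(* Main.v *)
Require Import Defs.
From HB Require Import structures.
From mathcomp Require Import all_boot all_order all_algebra.
Import Order.TTheory GRing.Theory Num.Theory.
Local Open Scope ring_scope.
Set Implicit Arguments. Unset Strict Implicit.

Lemma archi (x : rat) : exists n : nat, x < n%:R.
Proof.
case: (lerP x 0) => hx.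
  by exists 1%N; apply: le_lt_trans hx _.
by exists (Num.bound x); apply: archi_boundP; apply: ltW.
Qed.

Lemma le_addl (V : lmodType rat) (le : rel V) join (HR : is_riesz le join) x y z :
  le x y -> le (z + x) (z + y).
Proof. by move=> h; rewrite ![z + _]addrC; apply: (riesz_add HR). Qed.

Lemma le_opp (V : lmodType rat) (le : rel V) join (HR : is_riesz le join) x y :
  le x y -> le (- y) (- x).
Proof.
move=> h; have := riesz_add HR (- x - y) h.
by rewrite addrA addrN add0r addrCA subrr addr0.
Qed.

Lemma le_scale (V : lmodType rat) (le : rel V) join (HR : is_riesz le join) y (c d : rat) :
  le 0 y -> c <= d -> le (c *: y) (d *: y).
Proof.
move=> hy hcd; have h0 : 0 <= d - c by rewrite subr_ge0.
have := riesz_add HR (c *: y) (riesz_scale HR h0 hy).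
by rewrite scaler0 add0r scalerBl subrK.
Qed.

Lemma le_sub0 (V : lmodType rat) (le : rel V) join (HR : is_riesz le join) x y :
  le x y -> le (x - y) 0.
Proof. by move=> h; have := riesz_add HR (- y) h; rewrite subrr. Qed.

From Stdlib Require Import Classical.

Theorem proposition2p6 (V : lmodType rat) (le : rel V) (join : V -> V -> V)
    (u : V) (HR : is_riesz le join) (Hu : strong_unit le u)
    (m : V -> Prop) (Hm : is_point le join u m) :
  (forall a : V, is_dedekind (sigma u m a)) /\
  (forall a b : V,
      cut_eq (sigma u m (a + b)) (cut_add (sigma u m a) (sigma u m b))) /\
  (forall (l : rat) (a : V),
      cut_eq (sigma u m (l *: a)) (cut_scale l (sigma u m a))) /\
  (forall a b : V,
      cut_eq (sigma u m (join a b)) (cut_max (sigma u m a) (sigma u m b))) /\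
  (forall a b : V,
      cut_eq (sigma u m (rmeet join a b)) (cut_min (sigma u m a) (sigma u m b))) /\
  cut_eq (sigma u m u) (cut_of_rat 1).
Proof.
have [Hle0u Hsu] := Hu.
case: Hm => [mu [m2 [m3 [m4 [m5 m6]]]]].
have mono : forall x y, le x y -> m x -> m y.
  move=> x y hxy mx; have: m (y + (x - y)) by rewrite addrC subrK.
  case/m3 => // h; exfalso; exact: (m4 _ (le_sub0 HR hxy) h).
have m0 : ~ m 0 by apply: (m4 0); apply: (riesz_refl HR).
have mn : forall (n : nat) z, m (n.+1%:R *: z) -> m z.
  elim=> [|n IH] z; first by rewrite scale1r.
  by rewrite mulrS scalerDl scale1r => /m3 [] //; apply: IH.
have mpos : forall (c : rat) y, 0 < c -> le 0 y -> m y -> m (c *: y).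
  move=> c y hc hy my.
  have [n hn] := archi c^-1.
  case: n hn => [|n] hn.
    by exfalso; move: hn; rewrite ltNge invr_ge0 (ltW hc).
  apply: (mn n); rewrite scalerA.
  apply: (mono y) => //.
  rewrite -{1}(scale1r y); apply: (le_scale HR) => //.
  by rewrite -[X in X <= _](mulVf (lt0r_neq0 hc)) (ler_pM2r hc) ltW.
have mscale : forall (c : rat) x, 0 < c -> m x -> m (c *: x).
  move=> c x hc mx.
  have mj : m (join x 0) by apply/m5; left.
  have hj0 : le 0 (join x 0) by apply: (riesz_join_r HR).
  have := mpos c _ hc hj0 mj.
  have hc' : 0 <= c^-1 by rewrite invr_ge0 ltW.
  set y := join (c *: x) 0.
  have h1 : le (join x 0) (c^-1 *: y).
    apply: (riesz_join_lub HR).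
      rewrite -{1}(scale1r x) -(mulVf (lt0r_neq0 hc)) -scalerA.
      by apply: (riesz_scale HR) => //; apply: (riesz_join_l HR).
    rewrite -(scaler0 _ c^-1).
    by apply: (riesz_scale HR) => //; apply: (riesz_join_r HR).
  have h2 : le (c *: join x 0) y.
    have := riesz_scale HR (ltW hc) h1.
    by rewrite scalerA mulfV ?(lt0r_neq0 hc) // scale1r.
  move=> /(mono _ _ h2) /m5 [] //.
have mscale_iff : forall (c : rat) x, 0 < c -> (m x <-> m (c *: x)).
  move=> c x hc; split; first exact: mscale.
  move=> /(mscale c^-1); rewrite scalerA mulVf ?(lt0r_neq0 hc) // scale1r.
  by apply; rewrite invr_gt0.
have mcu : forall c : rat, m (c *: u) <-> 0 < c.
  move=> c; split; last by move=> hc; apply: mscale.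
  rewrite ltNge; move=> mc; apply/negP => hc.
  apply: (m4 _ _ mc).
  by have := le_scale HR Hle0u hc; rewrite scale0r.
have UL : forall x s, m (s *: u - x) <-> m (- x - (- s) *: u).
  by move=> x s; rewrite scaleNr opprK addrC.
have Linh : forall a, exists p, m (a - p *: u).
  move=> a; have [n hn] := Hsu (- a).
  exists (- (n%:R + 1)); apply: (mono u) => //.
  have := le_addl HR (a + u) hn.
  by rewrite addrAC subrr add0r scaleNr opprK scalerDl scale1r addrA (addrAC a).
have Uinh : forall a, exists q, m (q *: u - a).
  move=> a; have [n hn] := Hsu a.
  exists (n%:R + 1); apply: (mono u) => //.
  have := riesz_add HR (u - a) hn.
  by rewrite addrC subrK addrA scalerDl scale1r.
have Lround : forall a p, m (a - p *: u) <-> exists p', p < p' /\ m (a - p' *: u).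
  move=> a p; split.
    move/m6 => [s [hs h]]; exists (p + s); split; first by rewrite ltrDl.
    by rewrite scalerDl opprD addrA.
  move=> [p' [hp h]]; apply/m6; exists (p' - p); split; first by rewrite subr_gt0.
  by rewrite scalerBl opprB addrA subrK.
have Uround : forall a q, m (q *: u - a) <-> exists q', q' < q /\ m (q' *: u - a).
  move=> a q; split.
    move/m6 => [s [hs h]]; exists (q - s); split; first by rewrite gtrBl.
    by rewrite scalerBl addrAC.
  move=> [q' [hq h]]; apply/m6; exists (q - q'); split; first by rewrite subr_gt0.
  by rewrite scalerBl opprB addrC addrA subrK.
have Ldisj : forall a p q, m (a - p *: u) -> m (q *: u - a) -> p < q.
  move=> a p q hp hq; rewrite ltNge; apply/negP => hqp.
  have h1 := mono _ _ (le_addl HR a (le_opp HR (le_scale HR Hle0u hqp))) hp.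
  by apply: (m2 (a - q *: u)); rewrite opprB.
have Lloc : forall a p q, p < q -> m (a - p *: u) \/ m (q *: u - a).
  move=> a p q hpq; apply: m3.
  by rewrite addrC addrA subrK -scalerBl; apply/mcu; rewrite subr_gt0.
have approx : forall a s, 0 < s -> exists p, m (a - p *: u) /\ ~ m (a - (p + s) *: u).
  move=> a s hs; case: (classic (exists p, m (a - p *: u) /\ ~ m (a - (p + s) *: u))) => // H.
  exfalso.
  have step : forall p, m (a - p *: u) -> m (a - (p + s) *: u).
    move=> p hp; case: (classic (m (a - (p + s) *: u))) => // hn.
    by case: H; exists p.
  have [p0 hp0] := Linh a; have [q0 hq0] := Uinh a.
  have hall : forall k : nat, m (a - (p0 + k%:R * s) *: u).
    elim=> [|k IH]; first by rewrite mul0r addr0.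
    by rewrite -addn1 natrD mulrDl mul1r addrA; apply: step.
  have [k hk] := archi ((q0 - p0) / s).
  have h1 := Ldisj _ _ _ (hall k) hq0.
  move: hk; rewrite ltr_pdivrMr // ltrBlDl => h2.
  by have := lt_trans h1 h2; rewrite ltxx.
have Lsplit : forall a b p q, m (a + b - (p + q) *: u) -> m (a - p *: u) \/ m (b - q *: u).
  by move=> a b p q; rewrite scalerDl opprD addrACA; apply: m3.
have Ladd : forall a b r, m (a + b - r *: u) <->
    exists p q, m (a - p *: u) /\ m (b - q *: u) /\ r = p + q.
  move=> a b r; split.
    move/Lround => [r' [hr h]].
    have hs : 0 < r' - r by rewrite subr_gt0.
    have [p [hp hnp]] := approx a (r' - r) hs.
    have e : r' = (p + (r' - r)) + (r - p).
      by rewrite addrAC !subrKC.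
    move: h; rewrite {1}e => /Lsplit [] // hb.
    by exists p, (r - p); split => //; split => //; rewrite addrC subrK.
  move=> [p [q [hp [hq ->]]]].
  have [p' [hpp hp']] := (Lround a p).1 hp.
  have e1 : a = a + b + - b by rewrite addrK.
  have e2 : p' = (p + q) + (p' - (p + q)) by rewrite addrC subrK.
  move: hp'; rewrite {1}e1 {1}e2 => /Lsplit [] // hb.
  exfalso; have hb' := (UL b (- (p' - (p + q)))).2; rewrite opprK in hb'.
  have h1 := Ldisj _ _ _ hq (hb' hb); rewrite opprB in h1.
  have h2 : p + q - p' < q by rewrite ltrBlDr addrC ltrD2l.
  by have := lt_trans h1 h2; rewrite ltxx.
have Ljoin : forall a b r, m (join a b - r *: u) <-> m (a - r *: u) \/ m (b - r *: u).
  move=> a b r.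
  have hle1 : le (join (a - r *: u) (b - r *: u)) (join a b - r *: u).
    by apply: (riesz_join_lub HR); apply: (riesz_add HR);
      [apply: (riesz_join_l HR) | apply: (riesz_join_r HR)].
  have hle2 : le (join a b - r *: u) (join (a - r *: u) (b - r *: u)).
    set J := join (a - r *: u) (b - r *: u).
    have h : le (join a b) (J + r *: u).
      apply: (riesz_join_lub HR).
        by have := riesz_add HR (r *: u) (riesz_join_l HR (a - r *: u) (b - r *: u)); rewrite subrK.
      by have := riesz_add HR (r *: u) (riesz_join_r HR (a - r *: u) (b - r *: u)); rewrite subrK.
    by have := riesz_add HR (- (r *: u)) h; rewrite addrK.
  split => h.
    by apply/m5; apply: (mono _ _ hle2 h).
  by apply: (mono _ _ hle1); apply/m5.
have Uup : forall a q q', q <= q' -> m (q *: u - a) -> m (q' *: u - a).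
  by move=> a q q' h; apply: mono; apply: (riesz_add HR); apply: (le_scale HR).
have Ujoin : forall a b s, m (s *: u - join a b) <-> m (s *: u - a) /\ m (s *: u - b).
  move=> a b s; split.
    move=> h; split; apply: (mono _ _ _ h); apply: (le_addl HR); apply: (le_opp HR);
      [apply: (riesz_join_l HR) | apply: (riesz_join_r HR)].
  move=> [ha hb].
  have [s1 [hs1 ha1]] := (Uround a s).1 ha.
  have [s2 [hs2 hb2]] := (Uround b s).1 hb.
  have [s' [hs' [ha' hb']]] : exists s', s' < s /\ m (s' *: u - a) /\ m (s' *: u - b).
    case: (lerP s1 s2) => h12.
      by exists s2; split => //; split => //; apply: (Uup _ s1).
    by exists s1; split => //; split => //; apply: (Uup _ s2) => //; apply: ltW.
  case: (Lloc (join a b) s' s hs') => // /Ljoin [] h.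
    by have := Ldisj _ _ _ h ha'; rewrite ltxx.
  by have := Ldisj _ _ _ h hb'; rewrite ltxx.
split.
  move=> a; rewrite /is_dedekind /sigma /=.
  split; first exact: Linh. split; first exact: Uinh.
  split; first exact: Lround. split; first exact: Uround.
  split; first exact: Ldisj. exact: Lloc.
split.
  move=> a b r; rewrite /sigma /cut_add /=; split; first exact: Ladd.
  split.
    move/UL; rewrite opprD => /Ladd [p [q [hp [hq e]]]].
    exists (-p), (-q); split; first by apply/UL; rewrite !opprK.
    split; first by apply/UL; rewrite !opprK.
    by rewrite -opprD -e opprK.
  move=> [p [q [hp [hq ->]]]]; apply/UL; rewrite opprD; apply/Ladd.
  exists (-p), (-q); split; first by move/UL: hp.
  split; first by move/UL: hq.
  by rewrite opprD.
split.
  move=> l a r; rewrite /cut_scale; case: (boolP (0 < l)) => hl /=.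
    have l0 : l != 0 by rewrite lt0r_neq0.
    rewrite /sigma /=; split.
      have e : l *: (a - (r / l) *: u) = l *: a - r *: u.
        by rewrite scalerBr scalerA mulrCA mulfV // mulr1.
      by rewrite -e; apply: iff_sym; apply: mscale_iff.
    have e : l *: ((r / l) *: u - a) = r *: u - l *: a.
      by rewrite scalerBr scalerA mulrCA mulfV // mulr1.
    by rewrite -e; apply: iff_sym; apply: mscale_iff.
  case: (boolP (l < 0)) => hl' /=.
    have l0 : l != 0 by rewrite ltr0_neq0.
    have hc : 0 < - l^-1 by rewrite oppr_gt0 invr_lt0.
    rewrite /sigma /=; split.
      have e : (- l^-1) *: (l *: a - r *: u) = (r / l) *: u - a.
        rewrite scalerBr !scalerA mulNr mulVf // scaleN1r mulNr mulrC scaleNr.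
        by rewrite opprK addrC.
      by rewrite -e; apply: mscale_iff.
    have e : (- l^-1) *: (r *: u - l *: a) = a - (r / l) *: u.
      rewrite scalerBr !scalerA !mulNr mulVf // !scaleNr scale1r opprK mulrC.
      by rewrite addrC.
    by rewrite -e; apply: mscale_iff.
  have /eqP -> : l == 0 by rewrite eq_le !leNgt hl hl'.
  rewrite /sigma /cut_of_rat /= scale0r add0r subr0; split.
    by rewrite -scaleNr mcu oppr_gt0.
  exact: mcu.
split.
  by move=> a b r; split; [exact: Ljoin | exact: Ujoin].
split.
  move=> a b r; rewrite /rmeet /sigma /cut_min /=; set J := join (- a) (- b); split.
    split => [h|[ha hb]].
      have := (UL J (- r)).2; rewrite opprK => /(_ h) /Ujoin [h1 h2].
      by split; [move/UL: h1 | move/UL: h2]; rewrite !opprK.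
    have key : m ((- r) *: u - J).
      by apply/Ujoin; split; apply/UL; rewrite !opprK.
    by move/UL: key; rewrite opprK.
  split => [h|h].
    have : m (J - (- r) *: u) by move/UL: h; rewrite opprK.
    by case/Ljoin => h'; [left | right]; apply/UL.
  apply/UL; rewrite opprK; apply/Ljoin.
  by case: h => h; [left | right]; move/UL: h.
move=> r; rewrite /sigma /cut_of_rat /=; split.
  by rewrite -{1}(scale1r u) -scalerBl mcu subr_gt0.
by rewrite -{2}(scale1r u) -scalerBl mcu subr_gt0.
Qed.
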